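(* Let $\mathfrak{A}=(Q,\Sigma_I\times\Sigma_O,q_\iota,\delta,\Omega)$ be a deterministic parity automaton and let $k>0$. If Player~$O$ wins the game $\mathcal{G}_k$, then she wins the delay game $\Gamma_{2k-1}(L(\mathfrak{A}))$.
   Context: DPA: $\mathfrak{A}$ has finite state set $Q$, initial state $q_\iota$, transition function $\delta\colon Q\times(\Sigma_I\times\Sigma_O)\to Q$, coloring $\Omega\colon Q\to\mathbb{N}$; a run $q_0q_1\cdots$ ($q_0=q_\iota$, $q_{i+1}=\delta(q_i,\text{$i$-th letter})$) is accepting iff $\limsup_i\Omega(q_i)$ is even; $L(\mathfrak{A})$ is the set of words with accepting run. Delay game $\Gamma_m(L)$: in round $0$ Player~$I$ picks $a_0\cdots a_m\in\Sigma_I$, then Player~$O$ picks $b_0\in\Sigma_O$; in round $i>0$ Player~$I$ picks $a_{m+i}$, then Player~$O$ picks $b_i$. A strategy for $O$ is $\sigma\colon\Sigma_I^*\to\Sigma_O$, an outcome is consistent with it if $b_i=\sigma(a_0\cdots a_{i+m})$ for all $i$, it is winning if all consistent outcomes $\binom{a_0}{b_0}\binom{a_1}{b_1}\cdots$ lie in $L$, and $O$ wins if she has a winning strategy. The game $\mathcal{G}_k$: let $C=\Omega(Q)$. Define $\delta_\mathcal{T}((q,c),\binom{a}{b})=(q',\max\{c,\Omega(q')\})$ with $q'=\delta(q,\binom{a}{b})$, and $\delta_\mathcal{P}\colon 2^{Q\times C}\times\Sigma_I\to 2^{Q\times C}$ by $\delta_\mathcal{P}(S,a)=\bigcup_{(q,c)\in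 S}\bigcup_{b\in\Sigma_O}\{\delta_\mathcal{T}((q,c),\binom{a}{b})\}$, extended to words by $\delta^*_\mathcal{P}(S,\epsilon)=S$, $\delta^*_\mathcal{P}(S,wa)=\delta_\mathcal{P}(\delta^*_\mathcal{P}(S,w),a)$. For nonempty $D\subseteq Q\times C$ and $w\in\Sigma_I^*$ let $r^D_w\colon D\to 2^{Q\times C}$, $r^D_w(q,c)=\delta^*_\mathcal{P}(\{(q,\Omega(q))\},w)$. Let $\mathfrak{R}=\{r^D_w : w\in\Sigma_I^k,\ \emptyset\ne D\subseteq Q\times C\}$ (partial functions $Q\times C\rightharpoonup 2^{Q\times C}$ with domain $\mathrm{dom}(r)$). In $\mathcal{G}_k$, in each round $i\in\mathbb{N}$ Player~$I$ picks $r_i\in\mathfrak{R}$ and then Player~$O$ picks $(q_i,c_i)\in Q\times C$, subject to: $\mathrm{dom}(r_0)=\{(q_\iota,\Omega(q_\iota))\}$, $\mathrm{dom}(r_i)=r_{i-1}(q_{i-1},c_{i-1})$ for $i>0$, and $(q_i,c_i)\in\mathrm{dom}(r_i)$ for all $i$. A play is won by Player~$O$ iff $\limsup_i c_i$ is even. A strategy for $O$ maps each prefix $r_0(q_0,c_0)\cdots r_i$ to a legal $(q_i,c_i)$; she wins $\mathcal{G}_k$ if she has a strategy all of whose consistent plays she wins. *)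

(* Defs.v *)
From mathcomp Require Import all_boot.
Set Implicit Arguments. Unset Strict Implicit. Unset Printing Implicit Defensive.

Definition limsup_even (c : nat -> nat) : Prop :=
  exists m, ~~ odd m /\ (forall N, exists n, N <= n /\ c n = m) /\
            (exists N, forall n, N <= n -> c n <= m).

Section DPA.
Variables (Q SI SO : finType) (qi : Q) (delta : Q -> SI * SO -> Q)
          (Omega : Q -> nat).

Fixpoint run (w : nat -> SI * SO) (i : nat) : Q :=
  match i with 0 => qi | i'.+1 => delta (run w i') (w i') end.

Definition accepts (w : nat -> SI * SO) : Prop :=
  limsup_even (fun i => Omega (run w i)).

Definition prefix (a : nat -> SI) (n : nat) : seq SI := [seq a j | j <- iota 0 n].

Definition wins_delay_game (m : nat) : Prop :=
  exists sigma : seq SI -> SO,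
    forall a : nat -> SI,
      accepts (fun i => (a i, sigma (prefix a (i + m).+1))).

Definition col : finType := seq_sub (codom Omega).
Definition omc (q : Q) : col := @SeqSub _ _ (Omega q) (codom_f Omega q).
Definition maxc (c c' : col) : col := if ssval c <= ssval c' then c' else c.

Definition deltaT (p : Q * col) (ab : SI * SO) : Q * col :=
  let q' := delta p.1 ab in (q', maxc p.2 (omc q')).

Definition deltaP (S : {set Q * col}) (a : SI) : {set Q * col} :=
  [set deltaT p (a, b) | p in S, b in [set: SO]].

Definition deltaPs (S : {set Q * col}) (w : seq SI) : {set Q * col} :=
  foldl deltaP S w.

(* partial functions Q x C -> 2^(Q x C), None = undefined *)
Definition rtype : finType := {ffun Q * col -> option {set Q * col}}.

Definition dom (r : rtype) : {set Q * col} := [set p | r p != None].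

Definition rfun (D : {set Q * col}) (w : seq SI) : rtype :=
  [ffun p => if p \in D then Some (deltaPs [set (p.1, omc p.1)] w) else None].

Definition inR (k : nat) (r : rtype) : Prop :=
  exists (D : {set Q * col}) (w : seq SI), D != set0 /\ size w = k /\ r = rfun D w.

Definition history (rs : nat -> rtype) (ps : nat -> Q * col) (i : nat)
  : seq (rtype * (Q * col)) := [seq (rs j, ps j) | j <- iota 0 i].

(* Player O wins G_k: a strategy (history r_0 p_0 ... r_{i-1} p_{i-1}, current r_i)
   |-> p_i such that in every consistent play (i) her moves are legal as long as
   Player I's moves have been legal, and (ii) every infinite legal play is won. *)
Definition wins_Gk (k : nat) : Prop :=
  exists sigma : seq (rtype * (Q * col)) -> rtype -> Q * col,
    forall (rs : nat -> rtype) (ps : nat -> Q * col),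
      (forall i, inR k (rs i)) ->
      dom (rs 0) = [set (qi, omc qi)] ->
      (forall i, ps i = sigma (history rs ps i) (rs i)) ->
      (forall n, (forall i, i < n -> rs i (ps i) = Some (dom (rs i.+1))) ->
                 ps n \in dom (rs n)) /\
      ((forall i, rs i (ps i) = Some (dom (rs i.+1))) ->
       limsup_even (fun i => ssval (ps i).2)).

End DPA.

(* Main.v *)
Require Import Defs.
From mathcomp Require Import all_boot zify.
Set Implicit Arguments. Unset Strict Implicit. Unset Printing Implicit Defensive.

Section Proof.
Variables (Q SI SO : finType) (qi : Q) (delta : Q -> SI * SO -> Q)
          (Omega : Q -> nat).

Notation C := (col Omega).
Notation RT := (rtype Omega).
Notation dT := (@deltaT Q SI SO delta Omega).
Notation dPs := (@deltaPs Q SI SO delta Omega).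

Lemma deltaPsP (S : {set Q * C}) (w : seq SI) x :
  x \in dPs S w <->
  exists p, p \in S /\ exists bs : seq SO, size bs = size w /\ x = foldl dT p (zip w bs).
Proof.
elim: w S => [|a w IH] S /=.
  split; [move=> H; exists x; split => //; exists [::]; split => //|].
  by case=> p [pS [bs [/size0nil -> ->]]].
rewrite /deltaPs /= -/(deltaPs _ _ _) IH; split.
  case=> p' [/imset2P [p b pS _ ->] [bs [Hs ->]]].
  by exists p; split => //; exists (b :: bs); split => /=; [rewrite Hs|].
case=> p [pS [[|b bs] [Hs Ex]]] //=; subst x.
exists (dT p (a, b)); split; last by exists bs; split => //; by case: Hs.
by apply/imset2P; exists p b => //; rewrite inE.
Qed.

Lemma dom_rfun (D : {set Q * C}) w : dom (rfun delta D w) = D.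
Proof. by apply/setP => x; rewrite !inE ffunE; case: (x \in D). Qed.

Lemma fold_run W s n (c : C) :
  let p := foldl dT (run qi delta W s, c) (map W (iota s n)) in
  p.1 = run qi delta W (s + n) /\ ssval c <= ssval p.2 /\
  (forall t, s < t <= s + n -> Omega (run qi delta W t) <= ssval p.2) /\
  (ssval p.2 = ssval c \/ exists t, s < t <= s + n /\ Omega (run qi delta W t) = ssval p.2).
Proof.
elim: n s c => [|n IH] s c /=.
  rewrite addn0; split => //; split => //; split; last by left.
  by move=> t; lia.
have [H1 [H2 [H3 H4]]] := IH s.+1 (maxc c (omc Omega (run qi delta W s.+1))).
rewrite /= in H1 H2 H3 H4.
have Em : ssval (maxc c (omc Omega (run qi delta W s.+1))) =
          maxn (ssval c) (Omega (run qi delta W s.+1)).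
  by rewrite /maxc; case: ifP => /= h; lia.
rewrite Em in H2 H4.
set p := foldl _ _ _ in H1 H2 H3 H4 *.
split; first by rewrite H1 addnS.
split; first lia.
split.
  move=> t Ht; case: (t =P s.+1) => [->|ne]; first lia.
  apply: H3; lia.
case: H4 => [E|[t [Ht E]]]; last by right; exists t; split => //; lia.
rewrite E.
case: (leqP (Omega (run qi delta W s.+1)) (ssval c)) => h.
  by left; lia.
by right; exists s.+1; split; [lia | lia].
Qed.


Variables (k : nat) (sigma : seq (RT * (Q * C)) -> RT -> Q * C) (b0 : SO).

Definition block (a : nat -> SI) j := [seq a t | t <- iota (j * k) k].

Fixpoint st (a : nat -> SI) n : seq (RT * (Q * C)) * {set Q * C} :=
  match n with
  | 0 => ([::], [set (qi, omc Omega qi)])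
  | n'.+1 => let sn := st a n' in
             let r := rfun delta sn.2 (block a n') in
             let p := sigma sn.1 r in
             (rcons sn.1 (r, p), dPs [set (p.1, omc Omega p.1)] (block a n'))
  end.

Definition rsd a n := rfun delta (st a n).2 (block a n).
Definition psd a n := sigma (st a n).1 (rsd a n).

Definition wit (p p' : Q * C) (w : seq SI) : seq SO :=
  match [pick bs : k.-tuple SO | foldl dT (p.1, omc Omega p.1) (zip w bs) == p'] with
  | Some bs => tval bs
  | None => nseq k b0
  end.

Definition out a i :=
  nth b0 (wit (psd a (i %/ k)) (psd a (i %/ k).+1) (block a (i %/ k))) (i %% k).

Definition sigd (s : seq SI) : SO :=
  match s with [::] => b0 | x :: _ => out (fun t => nth x s t) (size s - 2 * k) end.

Definition agree N (a a' : nat -> SI) := forall t, t < N -> a t = a' t.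

Lemma block_agree N a a' j : agree N a a' -> j.+1 * k <= N -> block a j = block a' j.
Proof.
move=> H Hj; apply/eq_in_map => t; rewrite mem_iota => /andP [_ Ht].
apply: H; rewrite mulSn in Hj; lia.
Qed.

Lemma st_agree N a a' n : agree N a a' -> n * k <= N -> st a n = st a' n.
Proof.
move=> H; elim: n => [//|n IH] Hn /=.
rewrite IH; last by rewrite mulSn in Hn; lia.
by rewrite (block_agree H Hn).
Qed.

Lemma psd_agree N a a' n : agree N a a' -> n.+1 * k <= N -> psd a n = psd a' n.
Proof.
move=> H Hn; rewrite /psd /rsd (block_agree H Hn) (st_agree H) //.
rewrite mulSn in Hn; lia.
Qed.

Lemma out_agree N a a' i : agree N a a' -> (i %/ k).+2 * k <= N -> out a i = out a' i.
Proof.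
move=> H Hn; rewrite /out (psd_agree H Hn) (block_agree (N := N) (a' := a') H) ?(psd_agree (a' := a') H) //.
  rewrite !mulSn in Hn *; lia.
rewrite !mulSn in Hn *; lia.
Qed.


Hypothesis Hk : 0 < k.
Hypothesis HG : forall (rs : nat -> RT) (ps : nat -> Q * C),
      (forall i, inR delta k (rs i)) ->
      dom (rs 0) = [set (qi, omc Omega qi)] ->
      (forall i, ps i = sigma (history rs ps i) (rs i)) ->
      (forall n, (forall i, i < n -> rs i (ps i) = Some (dom (rs i.+1))) ->
                 ps n \in dom (rs n)) /\
      ((forall i, rs i (ps i) = Some (dom (rs i.+1))) ->
       limsup_even (fun i => ssval (ps i).2)).

Lemma hist a n : history (rsd a) (psd a) n = (st a n).1.
Proof.
elim: n => [//|n IH].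
by rewrite /history -addn1 iotaD map_cat -/(history _ _ _) IH /= cats1 addn1.
Qed.

Lemma size_block a j : size (block a j) = k.
Proof. by rewrite /block size_map size_iota. Qed.

Lemma dPs_nonempty p w : dPs [set p] w != set0.
Proof.
apply/set0Pn; exists (foldl dT p (zip w (nseq (size w) b0))).
apply/deltaPsP; exists p; split; first by rewrite inE.
by exists (nseq (size w) b0); rewrite size_nseq.
Qed.

Lemma st_nonempty a n : (st a n).2 != set0.
Proof.
case: n => [|n] /=; last exact: dPs_nonempty.
by apply/set0Pn; exists (qi, omc Omega qi); rewrite inE.
Qed.

Lemma inR_rsd a n : inR delta k (rsd a n).
Proof.
exists (st a n).2, (block a n); split; first exact: st_nonempty.
by split; [exact: size_block|].
Qed.

Lemma chain_of a i : psd a i \in (st a i).2 -> rsd a i (psd a i) = Some (dom (rsd a i.+1)).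
Proof. by move=> H; rewrite /rsd dom_rfun ffunE H. Qed.

Lemma psd_in a n : psd a n \in (st a n).2.
Proof.
have [H1 _] := HG (inR_rsd a) (dom_rfun _ _) (fun i => congr2 sigma (esym (hist a i)) erefl).
elim/ltn_ind: n => n IH.
rewrite -[(st a n).2](dom_rfun _ (block a n)).
apply: H1 => i Hi; apply: chain_of; exact: IH.
Qed.

Lemma psd_limsup a : limsup_even (fun i => ssval (psd a i).2).
Proof.
have [_ H2] := HG (inR_rsd a) (dom_rfun _ _) (fun i => congr2 sigma (esym (hist a i)) erefl).
by apply: H2 => i; apply: chain_of; apply: psd_in.
Qed.


Lemma wit_spec p p' w : size w = k -> p' \in dPs [set (p.1, omc Omega p.1)] w ->
  size (wit p p' w) = k /\ foldl dT (p.1, omc Omega p.1) (zip w (wit p p' w)) = p'.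
Proof.
move=> Hw /deltaPsP [p0 [/set1P -> [bs [Hs E]]]].
rewrite /wit; case: pickP => [bs' /eqP E'|N]; first by rewrite size_tuple.
have Hb : size bs == k by rewrite Hs Hw.
by move: (N (Tuple Hb)); rewrite /= -E eqxx.
Qed.

Definition Wd a t := (a t, out a t).

Lemma zip_block a j :
  zip (block a j) (wit (psd a j) (psd a j.+1) (block a j)) = map (Wd a) (iota (j * k) k).
Proof.
have Hin := psd_in a j.+1.
have [Hs _] := wit_spec (size_block a j) Hin.
apply: (@eq_from_nth _ (a 0, b0)).
  by rewrite size_zip size_map size_iota Hs size_block minnn.
move=> x; rewrite size_zip Hs size_block minnn => Hx.
rewrite nth_zip ?Hs ?size_block // (nth_map 0) ?size_iota // nth_iota //.
rewrite /block (nth_map 0) ?size_iota // nth_iota // /Wd /out.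
have -> : (j * k + x) %/ k = j by rewrite divnMDl // divn_small // addn0.
by rewrite modnMDl modn_small.
Qed.

Lemma block_step a j : (psd a j).1 = run qi delta (Wd a) (j * k) ->
  (psd a j.+1).1 = run qi delta (Wd a) (j.+1 * k) /\
  (forall t, j * k <= t <= j * k + k -> Omega (run qi delta (Wd a) t) <= ssval (psd a j.+1).2) /\
  (exists t, j * k <= t <= j * k + k /\ Omega (run qi delta (Wd a) t) = ssval (psd a j.+1).2).
Proof.
move=> E.
have [_ F] := wit_spec (size_block a j) (psd_in a j.+1).
rewrite zip_block E in F.
have [H1 [H2 [H3 H4]]] := fold_run (Wd a) (j * k) k (omc Omega (run qi delta (Wd a) (j * k))).
rewrite F /= in H1 H2 H3 H4.
split; first by rewrite H1 mulSn addnC.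
split.
  move=> t Ht; case: (t =P j * k) => [->|ne]; first exact: H2.
  apply: H3; lia.
case: H4 => [E4|[t [Ht E4]]]; first by exists (j * k); split; [lia|rewrite E4].
by exists t; split => //; lia.
Qed.

Lemma run_psd a j : (psd a j).1 = run qi delta (Wd a) (j * k).
Proof.
elim: j => [|j IH].
  by have H0 := psd_in a 0; rewrite /= inE in H0; rewrite (eqP H0).
by have [] := block_step IH.
Qed.

End Proof.

Lemma limsup_blocks (c d : nat -> nat) k : 0 < k ->
  (forall j t, j * k <= t <= j * k + k -> c t <= d j.+1) ->
  (forall j, exists t, j * k <= t <= j * k + k /\ c t = d j.+1) ->
  limsup_even d -> limsup_even c.
Proof.
move=> Hk Hle Hex [m [Hm [Hinf [N HN]]]].
exists m; split => //; split.
  move=> N0; have [n [Hn Edn]] := Hinf N0.+1.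
  have [t [Ht Et]] := Hex n.-1.
  exists t; split; last by rewrite Et prednK // ?Edn; lia.
  have : n.-1 <= n.-1 * k by rewrite leq_pmulr.
  lia.
exists (N * k) => t Ht.
have Hd := divn_eq t k; have Hr := ltn_pmod t Hk.
have Hj : N <= (t %/ k).+1.
  move: Hd Hr Ht; set j := t %/ k; set r := t %% k => Hd Hr Ht.
  apply/negPn/negP; rewrite -ltnNge => Hlt.
  have : j.+1 * k <= N * k by rewrite leq_pmul2r //; lia.
  rewrite mulSn; lia.
apply: leq_trans (HN _ Hj).
apply: Hle; lia.
Qed.

Lemma run_ext (Q SI SO : finType) (qi : Q) (delta : Q -> SI * SO -> Q) W W' :
  W =1 W' -> forall i, run qi delta W i = run qi delta W' i.
Proof. by move=> E; elim => [//|i IH] /=; rewrite IH E. Qed.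

Theorem mainTheorem3 (Q SI SO : finType) (qi : Q) (delta : Q -> SI * SO -> Q)
    (Omega : Q -> nat) (k : nat) :
  0 < #|SO| -> 0 < k ->
  wins_Gk qi delta Omega k ->
  wins_delay_game qi delta Omega (2 * k - 1).
Proof.
move=> /card_gt0P [b0 _] Hk [sigma HG].
exists (sigd qi delta k sigma b0) => a.
have E : forall i, sigd qi delta k sigma b0 (Defs.prefix a (i + (2 * k - 1)).+1)
                   = out qi delta k sigma b0 a i.
  move=> i; rewrite /Defs.prefix.
  have -> : (i + (2 * k - 1)).+1 = i + 2 * k by lia.
  have -> : i + 2 * k = (i + 2 * k).-1.+1 by lia.
  rewrite /= size_map size_iota.
  have -> : (i + 2 * k).-1.+1 - 2 * k = i by lia.
  apply: (@out_agree _ _ _ _ _ _ _ _ _ (i + 2 * k)).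
    move=> [|t] Ht //=; rewrite (nth_map 0) ?size_iota ?nth_iota //; lia.
  have := leq_divM i k; rewrite !mulSn; lia.
rewrite /accepts.
have HW : (fun i => (a i, sigd qi delta k sigma b0 (Defs.prefix a (i + (2 * k - 1)).+1)))
          =1 Wd qi delta k sigma b0 a by move=> i; rewrite E.
have R := run_ext qi delta HW.
suff : limsup_even (fun t => Omega (run qi delta (Wd qi delta k sigma b0 a) t)).
  by case=> m [Hm [Hinf [N HN]]]; exists m; split => //; split;
     [move=> N0; have [n [Hn Hc]] := Hinf N0; exists n; rewrite R |
      exists N => n Hn; rewrite R; apply: HN].
apply: (limsup_blocks Hk _ _ (psd_limsup b0 HG a)).
  move=> j t Ht; have [_ [H _]] := block_step Hk HG (run_psd b0 Hk HG a j).
  exact: H.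
move=> j; have [_ [_ H]] := block_step Hk HG (run_psd b0 Hk HG a j).
exact: H.
Qed.
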